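(* Let $p$ and $q$ be $n$-ary terms in the language $\{\wedge,\circ,+\}$, with $p$ not containing $+$. Then the class of all varieties $\mathcal{V}$ such that $p\le q$ holds in $\mathrm{Crr}(\mathbf{A})$ for every $\mathbf{A}\in\mathcal{V}$ is a Mal'cev class. If moreover $q$ does not contain $+$, this class is a strong Mal'cev class.
   Context: For an algebra $\mathbf{A}$, $\mathrm{Crr}(\mathbf{A})$ is the set of all compatible reflexive binary relations of $\mathbf{A}$ (reflexive subuniverses of $\mathbf{A}^2$). For binary relations $R,T$ on $A$ and $k\ge 1$, $R\circ^{(k)}T$ is the set of pairs $(a,b)$ for which there are $c_0=a,c_1,\dots,c_k=b$ with $(c_i,c_{i+1})\in R$ for $i$ even and $(c_i,c_{i+1})\in T$ for $i$ odd; $R\circ T=R\circ^{(2)}T$; $R+T=\bigcup_{k}R\circ^{(k)}T$; $\wedge$ is intersection. A term $p(X_1,\dots,X_n)$ in $\{\wedge,\circ,+\}$ is interpreted on relations in this way. $\mathbf{A}$ satisfies the compatible reflexive relation inequality $p\le q$ if $p(R_1,\dots,R_n)\subseteq q(R_1,\dots,R_n)$ for all $R_1,\dots,R_n\in\mathrm{Crr}(\mathbf{A})$. A strong Mal'cev class is the class of all varieties in which some fixed finite set of equations (with unknown operation symbols) can be realized by terms of the variety; a Mal'cev class is the union of a sequence $\mathcal{K}_1\supseteq\mathcal{K}_2\supseteq\dots$, no wait—more precisely, a union of an increasing chain of strong Mal'cev classes $\mathcal{K}_1\subseteq\mathcal{K}_2\subseteq\cdots$ (each condition implying the next). *)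

(* Defs.v *)
From Stdlib Require List.
From mathcomp Require Import all_boot.
Set Implicit Arguments.
Unset Strict Implicit.
Unset Printing Implicit Defensive.

Inductive term (F : Type) (ar : F -> nat) (X : Type) : Type :=
| Var : X -> term ar X
| App : forall f : F, ('I_(ar f) -> term ar X) -> term ar X.
Arguments Var {F ar X} x.
Arguments App {F ar X} f args.

Record algebra (F : Type) (ar : F -> nat) : Type := Algebra {
  carrier :> Type;
  op : forall f : F, ('I_(ar f) -> carrier) -> carrier
}.

Fixpoint eval F (ar : F -> nat) X (A : algebra ar) (v : X -> A) (t : term ar X) : A :=
  match t with
  | Var x => v x
  | App f args => @op _ _ A f (fun i => eval v (args i))
  end.

Definition holds F (ar : F -> nat) (A : algebra ar) (e : term ar nat * term ar nat) : Prop :=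
  forall v : nat -> A, eval v e.1 = eval v e.2.

Record variety : Type := Variety {
  vsym : Type;
  varity : vsym -> nat;
  vaxioms : term varity nat * term varity nat -> Prop
}.

Definition in_variety (V : variety) (A : algebra (@varity V)) : Prop :=
  forall e, @vaxioms V e -> holds A e.

Definition variety_satisfies (V : variety) (e : term (@varity V) nat * term (@varity V) nat) : Prop :=
  forall A : algebra (@varity V), in_variety A -> holds A e.

Fixpoint subst F (ar : F -> nat) X Y (s : X -> term ar Y) (t : term ar X) : term ar Y :=
  match t with
  | Var x => s x
  | App f args => App f (fun i => subst s (args i))
  end.

(* A strong Mal'cev condition: finitely many unknown operation symbols with
   arities, and a finite list of equations between terms in these symbols. *)
Record malcev_condition : Type := MalcevCondition {
  msym : finType;
  marity : msym -> nat;
  meqs : seq (term marity nat * term marity nat)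
}.

Fixpoint translate (U : malcev_condition) F (ar : F -> nat)
  (tr : forall g : msym U, term ar 'I_(marity g)) (t : term (@marity U) nat) : term ar nat :=
  match t with
  | Var x => Var x
  | App g args => subst (fun i => translate tr (args i)) (tr g)
  end.

Definition realizes (V : variety) (U : malcev_condition) : Prop :=
  exists tr : forall g : msym U, term (@varity V) 'I_(marity g),
    forall e, List.In e (meqs U) ->
      variety_satisfies (translate tr e.1, translate tr e.2).

Definition strong_malcev_class (K : variety -> Prop) : Prop :=
  exists U : malcev_condition, forall V : variety, K V <-> realizes V U.

Definition malcev_class (K : variety -> Prop) : Prop :=
  exists U : nat -> malcev_condition,
    (forall k (V : variety), realizes V (U k) -> realizes V (U k.+1)) /\
    (forall V : variety, K V <-> exists k, realizes V (U k)).

Definition crr F (ar : F -> nat) (A : algebra ar) (R : A -> A -> Prop) : Prop :=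
  (forall a, R a a) /\
  (forall f (a b : 'I_(ar f) -> A), (forall i, R (a i) (b i)) -> R (@op _ _ A f a) (@op _ _ A f b)).

(* R o^(k+1) T : alternating chains of length k+1 starting with R. *)
Fixpoint rcompk (A : Type) (k : nat) (R T : A -> A -> Prop) : A -> A -> Prop :=
  match k with
  | 0 => R
  | k'.+1 => fun a b => exists c, R a c /\ rcompk k' T R c b
  end.

Definition rmeet (A : Type) (R T : A -> A -> Prop) : A -> A -> Prop :=
  fun a b => R a b /\ T a b.
Definition rcomp (A : Type) (R T : A -> A -> Prop) : A -> A -> Prop := rcompk 1 R T.
Definition rjoin (A : Type) (R T : A -> A -> Prop) : A -> A -> Prop :=
  fun a b => exists k, rcompk k R T a b.

Inductive rterm (n : nat) : Type :=
| RVar : 'I_n -> rterm n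
| RMeet : rterm n -> rterm n -> rterm n
| RComp : rterm n -> rterm n -> rterm n
| RJoin : rterm n -> rterm n -> rterm n.

Fixpoint rinterp n (A : Type) (R : 'I_n -> A -> A -> Prop) (p : rterm n) : A -> A -> Prop :=
  match p with
  | RVar i => R i
  | RMeet p1 p2 => rmeet (rinterp R p1) (rinterp R p2)
  | RComp p1 p2 => rcomp (rinterp R p1) (rinterp R p2)
  | RJoin p1 p2 => rjoin (rinterp R p1) (rinterp R p2)
  end.

Fixpoint join_free n (p : rterm n) : bool :=
  match p with
  | RVar _ => true
  | RMeet p1 p2 | RComp p1 p2 => join_free p1 && join_free p2
  | RJoin _ _ => false
  end.

Definition crr_ineq F (ar : F -> nat) (A : algebra ar) n (p q : rterm n) : Prop :=
  forall R : 'I_n -> A -> A -> Prop, (forall i, crr (R i)) ->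
    forall a b : A, rinterp R p a b -> rinterp R q a b.

(* Main.v *)
Require Import Defs.
From mathcomp Require Import all_boot zify.
From Stdlib Require Import FunctionalExtensionality ProofIrrelevance PropExtensionality ClassicalEpsilon.
Set Implicit Arguments. Unset Strict Implicit. Unset Printing Implicit Defensive.

Lemma subst_ext F (ar : F -> nat) X Y (s s' : X -> term ar Y) t :
  (forall x, s x = s' x) -> subst s t = subst s' t.
Proof.
move=> H; elim: t => [x|f args IH] /=; first exact: H.
congr (App f _); apply: functional_extensionality => i; exact: IH.
Qed.

Lemma subst_subst F (ar : F -> nat) X Y Z (s : X -> term ar Y) (s2 : Y -> term ar Z) t :
  subst s2 (subst s t) = subst (fun x => subst s2 (s x)) t.
Proof.
elim: t => [x|f args IH] //=; congr (App f _); apply: functional_extensionality => i; exact: IH.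
Qed.

Lemma eval_subst F (ar : F -> nat) X Y (A : algebra ar) (w : Y -> A) (s : X -> term ar Y) t :
  eval w (subst s t) = eval (fun x => eval w (s x)) t.
Proof.
elim: t => [x|f args IH] //=; f_equal; apply: functional_extensionality => i; exact: IH.
Qed.

Lemma eval_ext F (ar : F -> nat) X (A : algebra ar) (w w' : X -> A) t :
  (forall x, w x = w' x) -> eval w t = eval w' t.
Proof.
move=> H; elim: t => [x|f args IH] //=; f_equal; apply: functional_extensionality => i; exact: IH.
Qed.

Lemma crr_eval F (ar : F -> nat) X (A : algebra ar) (R : A -> A -> Prop) (al be : X -> A) t :
  crr R -> (forall x, R (al x) (be x)) -> R (eval al t) (eval be t).
Proof.
move=> [_ Hc] H; elim: t => [x|f args IH] /=; [exact: H | apply: Hc => i; exact: IH].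
Qed.

Definition rsub (A : Type) (R T : A -> A -> Prop) := forall a b, R a b -> T a b.
Definition rrefl (A : Type) (R : A -> A -> Prop) := forall a, R a a.

Lemma rcompk_mono A k (R T R' T' : A -> A -> Prop) :
  rsub R R' -> rsub T T' -> rsub (rcompk k R T) (rcompk k R' T').
Proof.
elim: k R T R' T' => [|k IH] R T R' T' HR HT a b /=; first exact: HR.
move=> [c [h1 h2]]; exists c; split; [exact: HR | exact: (IH T R T' R')].
Qed.

Lemma rcompk_step A k (R T : A -> A -> Prop) :
  rrefl R -> rrefl T -> rsub (rcompk k R T) (rcompk k.+1 R T).
Proof.
elim: k R T => [|k IH] R T hR hT a b /=.
  by move=> h; exists b; split; [done | apply: hT].
move=> [c [h1 h2]]; exists c; split => //; exact: (IH T R).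
Qed.

Lemma rcompk_le A k m (R T : A -> A -> Prop) :
  rrefl R -> rrefl T -> k <= m -> rsub (rcompk k R T) (rcompk m R T).
Proof.
move=> hR hT; elim: m => [|m IH]; first by rewrite leqn0 => /eqP ->.
rewrite leq_eqVlt => /orP [/eqP -> //|]; rewrite ltnS => /IH h a b /h.
exact: rcompk_step.
Qed.

Lemma rcompk_refl A k (R T : A -> A -> Prop) :
  rrefl R -> rrefl T -> rrefl (rcompk k R T).
Proof.
elim: k R T => [|k IH] R T hR hT a //=.
exists a; split => //; exact: IH.
Qed.

Lemma rcompk_ex A m (X Y : A -> A -> Prop) (Xk Yk : nat -> A -> A -> Prop) :
  (forall k k', k <= k' -> rsub (Xk k) (Xk k')) ->
  (forall k k', k <= k' -> rsub (Yk k) (Yk k')) ->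
  (forall a b, X a b -> exists k, Xk k a b) -> (forall a b, Y a b -> exists k, Yk k a b) ->
  forall a b, rcompk m X Y a b -> exists k, rcompk m (Xk k) (Yk k) a b.
Proof.
elim: m X Y Xk Yk => [|m IH] X Y Xk Yk mX mY hX hY a b /=; first exact: hX.
move=> [c [h1 h2]].
have [k1 H1] := hX _ _ h1.
have [k2 H2] := IH Y X Yk Xk mY mX hY hX _ _ h2.
exists (maxn k1 k2); exists c; split.
  exact: (mX k1 _ (leq_maxl _ _)).
apply: (rcompk_mono (R := Yk k2) (T := Xk k2)) H2.
  exact: mY (leq_maxr _ _).
exact: mX (leq_maxr _ _).
Qed.

Definition allrefl n A (R : 'I_n -> A -> A -> Prop) := forall i, rrefl (R i).

Lemma rinterp_refl n A (R : 'I_n -> A -> A -> Prop) p : allrefl R -> rrefl (rinterp R p).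
Proof.
move=> HR; elim: p => [i|p1 IH1 p2 IH2|p1 IH1 p2 IH2|p1 IH1 p2 IH2] a /=.
- exact: HR.
- split; [exact: IH1 | exact: IH2].
- exists a; split; [exact: IH1 | exact: IH2].
- exists 0; exact: IH1.
Qed.

Fixpoint rj n k (a b : rterm n) : rterm n :=
  match k with 0 => a | k'.+1 => RComp a (rj k' b a) end.

Lemma rj_interp n A (R : 'I_n -> A -> A -> Prop) k a b x y :
  rinterp R (rj k a b) x y <-> rcompk k (rinterp R a) (rinterp R b) x y.
Proof.
elim: k a b x y => [|k IH] a b x y //=.
split => -[c [h1 h2]]; exists c; split => //; exact/IH.
Qed.

Lemma rj_jf n k (a b : rterm n) : join_free a -> join_free b -> join_free (rj k a b).
Proof. by elim: k a b => [|k IH] a b //= ha hb; rewrite ha IH. Qed.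

Fixpoint unj n k (q : rterm n) : rterm n :=
  match q with
  | RVar i => RVar i
  | RMeet a b => RMeet (unj k a) (unj k b)
  | RComp a b => RComp (unj k a) (unj k b)
  | RJoin a b => rj k (unj k a) (unj k b)
  end.

Lemma unj_jf n k (q : rterm n) : join_free (unj k q).
Proof. by elim: q => //= a ha b hb; rewrite ?ha ?hb ?rj_jf. Qed.

Lemma unj_sub n A (R : 'I_n -> A -> A -> Prop) k q : rsub (rinterp R (unj k q)) (rinterp R q).
Proof.
elim: q => [i|a IHa b IHb|a IHa b IHb|a IHa b IHb] x y //=.
- by move=> [h1 h2]; split; [exact: IHa | exact: IHb].
- by move=> [c [h1 h2]]; exists c; split; [exact: IHa | exact: IHb].
- move/rj_interp => h; exists k; exact: rcompk_mono h.
Qed.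

Lemma unj_le n A (R : 'I_n -> A -> A -> Prop) q k m :
  allrefl R -> k <= m -> rsub (rinterp R (unj k q)) (rinterp R (unj m q)).
Proof.
move=> HR km; elim: q => [i|a IHa b IHb|a IHa b IHb|a IHa b IHb] x y //=.
- by move=> [h1 h2]; split; [exact: IHa | exact: IHb].
- by move=> [c [h1 h2]]; exists c; split; [exact: IHa | exact: IHb].
- move/rj_interp => h; apply/rj_interp.
  apply: (rcompk_le (rinterp_refl _ HR) (rinterp_refl _ HR) km).
  exact: rcompk_mono h.
Qed.

Lemma unj_ex n A (R : 'I_n -> A -> A -> Prop) q :
  allrefl R -> forall x y, rinterp R q x y -> exists k, rinterp R (unj k q) x y.
Proof.
move=> HR; elim: q => [i|a IHa b IHb|a IHa b IHb|a IHa b IHb] x y /=.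
- by move=> h; exists 0.
- move=> [/IHa [k1 h1] /IHb [k2 h2]]; exists (maxn k1 k2); split.
    exact: (unj_le HR (leq_maxl k1 k2)).
  exact: (unj_le HR (leq_maxr k1 k2)).
- move=> [c [/IHa [k1 h1] /IHb [k2 h2]]]; exists (maxn k1 k2); exists c; split.
    exact: (unj_le HR (leq_maxl k1 k2)).
  exact: (unj_le HR (leq_maxr k1 k2)).
- move=> [m hm].
  have [k hk] := rcompk_ex (Xk := fun k => rinterp R (unj k a)) (Yk := fun k => rinterp R (unj k b))
     (fun k k' => unj_le HR) (fun k k' => unj_le HR) IHa IHb hm.
  exists (maxn k m); apply/rj_interp.
  apply: (rcompk_le (rinterp_refl _ HR) (rinterp_refl _ HR) (leq_maxr k m)).
  apply: rcompk_mono hk; exact: unj_le HR (leq_maxl k m).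
Qed.

Definition edge := (nat * nat * nat)%type.

Fixpoint pat n (p : rterm n) (s t nx : nat) : seq edge * nat :=
  match p with
  | RVar i => ([:: (s, t, nat_of_ord i)], nx)
  | RMeet p1 p2 => let r1 := pat p1 s t nx in let r2 := pat p2 s t r1.2 in (r1.1 ++ r2.1, r2.2)
  | RComp p1 p2 => let r1 := pat p1 s nx nx.+1 in let r2 := pat p2 nx t r1.2 in (r1.1 ++ r2.1, r2.2)
  | RJoin _ _ => ([::], nx)
  end.

Definition relN n A (R : 'I_n -> A -> A -> Prop) (l : nat) (a b : A) :=
  exists i : 'I_n, nat_of_ord i = l /\ R i a b.

Definition psat n A (R : 'I_n -> A -> A -> Prop) (v : nat -> A) (E : seq edge) :=
  forall e, e \in E -> relN R e.2 (v e.1.1) (v e.1.2).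

Lemma psat_cat n A (R : 'I_n -> A -> A -> Prop) v E1 E2 :
  psat R v (E1 ++ E2) <-> psat R v E1 /\ psat R v E2.
Proof.
split.
  by move=> h; split => e he; apply: h; rewrite mem_cat he ?orbT.
by move=> [h1 h2] e; rewrite mem_cat => /orP [/h1|/h2].
Qed.

Lemma pat_sound n A (R : 'I_n -> A -> A -> Prop) (p : rterm n) s t nx v :
  join_free p -> psat R v (pat p s t nx).1 -> rinterp R p (v s) (v t).
Proof.
elim: p s t nx => [i|a IHa b IHb|a IHa b IHb|a IHa b IHb] s t nx //=.
- move=> _ h; have [j [hj hR]] := h _ (mem_head _ _).
  by have -> : i = j by apply: val_inj.
- by move=> /andP [ja jb] /psat_cat [h1 h2]; split; [exact: IHa h1 | exact: IHb h2].
- move=> /andP [ja jb] /psat_cat [h1 h2]; exists (v nx); split; [exact: IHa h1 | exact: IHb h2].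
Qed.

Lemma pat_bound n (p : rterm n) s t nx : s < nx -> t < nx ->
  nx <= (pat p s t nx).2 /\
  forall e, e \in (pat p s t nx).1 -> e.1.1 < (pat p s t nx).2 /\ e.1.2 < (pat p s t nx).2.
Proof.
elim: p s t nx => [i|a IHa b IHb|a IHa b IHb|a IHa b IHb] s t nx hs ht //=.
- by split => // e; rewrite inE => /eqP ->.
- have [l1 h1] := IHa s t nx hs ht.
  have [l2 h2] := IHb s t (pat a s t nx).2 (leq_trans hs l1) (leq_trans ht l1).
  split; first exact: leq_trans l2.
  move=> e; rewrite mem_cat => /orP [/h1 [e1 e2]|/h2 //].
  by split; apply: leq_trans l2.
- have [l1 h1] := IHa s nx nx.+1 (leq_trans hs (leqnSn nx)) (ltnSn nx).
  have [l2 h2] := IHb nx t (pat a s nx nx.+1).2 l1 (leq_trans ht (ltnW l1)).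
  split; first exact: ltnW (leq_trans l1 l2).
  move=> e; rewrite mem_cat => /orP [/h1 [e1 e2]|/h2 //].
  by split; apply: leq_trans l2.
Qed.

Lemma psat_ext n A (R : 'I_n -> A -> A -> Prop) v v' m E :
  (forall x, x < m -> v x = v' x) -> (forall e, e \in E -> e.1.1 < m /\ e.1.2 < m) ->
  psat R v E -> psat R v' E.
Proof.
move=> hv hE h e he; have [e1 e2] := hE e he.
by rewrite -!hv //; apply: h.
Qed.

Lemma pat_complete n A (R : 'I_n -> A -> A -> Prop) (p : rterm n) s t nx (v : nat -> A) :
  join_free p -> s < nx -> t < nx -> rinterp R p (v s) (v t) ->
  exists v', (forall x, x < nx -> v' x = v x) /\ psat R v' (pat p s t nx).1.
Proof.
elim: p s t nx v => [i|a IHa b IHb|a IHa b IHb|a IHa b IHb] s t nx v //= jf hs ht.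
- move=> h; exists v; split => // e; rewrite inE => /eqP -> /=; by exists i.
- case/andP: jf => ja jb; move=> [h1 h2].
  have [l1 hb1] := pat_bound a hs ht.
  have [v1 [e1 s1]] := IHa s t nx v ja hs ht h1.
  have h2' : rinterp R b (v1 s) (v1 t) by rewrite !e1.
  have [v2 [e2 s2]] := IHb s t _ v1 jb (leq_trans hs l1) (leq_trans ht l1) h2'.
  exists v2; split.
    by move=> x hx; rewrite e2 ?e1 //; exact: leq_trans hx l1.
  apply/psat_cat; split => //.
  apply: (psat_ext (m := (pat a s t nx).2) _ hb1 s1) => x hx; symmetry; exact: e2.
- case/andP: jf => ja jb; move=> [c [h1 h2]].
  pose w x := if x == nx then c else v x.
  have hs1 : s < nx.+1 by exact: leq_trans hs (leqnSn nx).
  have [l1 hb1] := pat_bound a hs1 (ltnSn nx).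
  have h1' : rinterp R a (w s) (w nx) by rewrite /w eqxx (ltn_eqF hs).
  have [v1 [e1 s1]] := IHa s nx nx.+1 w ja hs1 (ltnSn nx) h1'.
  have h2' : rinterp R b (v1 nx) (v1 t) by rewrite !e1 // /w ?eqxx ?(ltn_eqF ht) // ltnW.
  have [v2 [e2 s2]] := IHb nx t _ v1 jb l1 (leq_trans ht (ltnW l1)) h2'.
  exists v2; split.
    move=> x hx; rewrite e2; last exact: leq_trans hx (ltnW l1).
    by rewrite e1 ?/w ?(ltn_eqF hx) // ltnW.
  apply/psat_cat; split => //.
  apply: (psat_ext (m := (pat a s nx nx.+1).2) _ hb1 s1) => x hx; symmetry; exact: e2.
Qed.

Lemma subst_var F (ar : F -> nat) X (t : term ar X) : subst (fun x => Var x) t = t.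
Proof.
elim: t => [x|f args IH] //=; congr (App f _); apply: functional_extensionality => i; exact: IH.
Qed.

Section Free.
Variable V : variety.
Notation ar := (@varity V).
Notation tm := (term ar nat).

Definition vsat (s t : tm) := @variety_satisfies V (s, t).

Lemma vsat_refl t : vsat t t. Proof. by move=> A hA w. Qed.
Lemma vsat_sym s t : vsat s t -> vsat t s. Proof. by move=> h A hA w; rewrite (h A hA w). Qed.
Lemma vsat_trans s t u : vsat s t -> vsat t u -> vsat s u.
Proof. by move=> h1 h2 A hA w; rewrite (h1 A hA w) (h2 A hA w). Qed.
Lemma vsat_subst (sg : nat -> tm) s t : vsat s t -> vsat (subst sg s) (subst sg t).
Proof. by move=> h A hA w; rewrite /= !eval_subst; apply: h. Qed.
Lemma vsat_App f (a b : 'I_(ar f) -> tm) : (forall j, vsat (a j) (b j)) -> vsat (App f a) (App f b).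
Proof.
move=> h A hA w /=; f_equal; apply: functional_extensionality => j; exact: h.
Qed.

Definition cls (t : tm) : tm -> Prop := fun s => vsat t s.
Definition Qc := {P : tm -> Prop | exists t, P = cls t}.
Definition mkQ (t : tm) : Qc := exist _ (cls t) (ex_intro _ t erefl).
Definition repr (a : Qc) : tm := proj1_sig (constructive_indefinite_description _ (proj2_sig a)).
Lemma reprP (a : Qc) : proj1_sig a = cls (repr a).
Proof. exact: (proj2_sig (constructive_indefinite_description _ (proj2_sig a))). Qed.

Lemma Qc_eq (a b : Qc) : proj1_sig a = proj1_sig b -> a = b.
Proof.
case: a => [P hP]; case: b => [P' hP'] /= e; subst P'.
by rewrite (proof_irrelevance _ hP hP').
Qed.

Lemma mkQ_repr a : mkQ (repr a) = a.
Proof. by apply: Qc_eq; rewrite /= reprP. Qed.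

Lemma mkQ_eq s t : vsat s t -> mkQ s = mkQ t.
Proof.
move=> h; apply: Qc_eq => /=; apply: functional_extensionality => u.
apply: propositional_extensionality; rewrite /cls; split => h'.
  exact: vsat_trans (vsat_sym h) h'.
exact: vsat_trans h h'.
Qed.

Lemma mkQ_inj s t : mkQ s = mkQ t -> vsat s t.
Proof.
move=> /(congr1 (fun a => proj1_sig a)) /= e.
have : cls t t by exact: vsat_refl.
by rewrite -e.
Qed.

Definition Qop (f : vsym V) (a : 'I_(ar f) -> Qc) : Qc := mkQ (App f (fun j => repr (a j))).
Definition QA : algebra ar := @Algebra _ ar Qc Qop.

Lemma op_mkQ f (t : 'I_(ar f) -> tm) : Qop (fun j => mkQ (t j)) = mkQ (App f t).
Proof.
apply: mkQ_eq; apply: vsat_App => j; apply: mkQ_inj; exact: mkQ_repr.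
Qed.

Lemma eval_mkQ X (sg : X -> tm) t : eval (A := QA) (fun x => mkQ (sg x)) t = mkQ (subst sg t).
Proof.
elim: t => [x|f args IH] //=; rewrite -op_mkQ; congr (Qop _).
apply: functional_extensionality => j; exact: IH.
Qed.

Lemma QA_in : in_variety QA.
Proof.
move=> e he v.
have -> : v = fun x => mkQ (repr (v x)).
  by apply: functional_extensionality => x; rewrite mkQ_repr.
rewrite !eval_mkQ; apply: mkQ_eq; apply: vsat_subst => A hA w; exact: hA e he w.
Qed.

Definition gx (k : nat) : Qc := mkQ (Var k).

Variable n : nat.
Variable Ep : seq edge.

Inductive gen (i : 'I_n) : Qc -> Qc -> Prop :=
| gbase u v : (u, v, nat_of_ord i) \in Ep -> gen i (gx u) (gx v)
| grefl a : gen i a a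
| gop f a b : (forall j, gen i (a j) (b j)) -> gen i (Qop (f := f) a) (Qop (f := f) b).

Lemma gen_crr i : crr (A := QA) (gen i).
Proof. split; [exact: grefl | move=> f a b h; exact: gop]. Qed.

Definition dflt : edge := (0, 0, 0).
Definition Lft (j : nat) : nat :=
  if j < size Ep then (nth dflt Ep j).1.1 else j - size Ep.
Definition Rgt (l : nat) (j : nat) : nat :=
  if j < size Ep then (if (nth dflt Ep j).2 == l then (nth dflt Ep j).1.2 else (nth dflt Ep j).1.1)
  else j - size Ep.

Lemma gen_tau i a b : gen i a b ->
  exists tau : tm, a = mkQ (subst (fun j => Var (Lft j)) tau) /\
                   b = mkQ (subst (fun j => Var (Rgt (nat_of_ord i) j)) tau).
Proof.
elim => [u v h|a0|f a0 b0 _ IH].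
- exists (Var (index (u, v, nat_of_ord i) Ep)) => /=.
  rewrite /Lft /Rgt index_mem h (nth_index dflt h) /= eqxx; split => //.
- exists (subst (fun x => Var (x + size Ep)) (repr a0)); rewrite !subst_subst /=.
  have E : forall l, subst (fun x => Var (Rgt l (x + size Ep))) (repr a0) = repr a0.
    move=> l; rewrite -[RHS]subst_var; apply: subst_ext => x.
    by rewrite /Rgt ltnNge leq_addl /= addnK.
  have E' : subst (fun x => Var (Lft (x + size Ep))) (repr a0) = repr a0.
    rewrite -[RHS]subst_var; apply: subst_ext => x.
    by rewrite /Lft ltnNge leq_addl /= addnK.
  by rewrite E E' mkQ_repr.
- pose ts := fun j => proj1_sig (constructive_indefinite_description _ (IH j)).
  have hts : forall j, a0 j = mkQ (subst (fun j => Var (Lft j)) (ts j)) /\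
                       b0 j = mkQ (subst (fun j => Var (Rgt (nat_of_ord i) j)) (ts j)).
    move=> j; exact: (proj2_sig (constructive_indefinite_description _ (IH j))).
  exists (App f ts) => /=; split; rewrite -op_mkQ; congr (Qop _);
    apply: functional_extensionality => j; by case: (hts j).
Qed.

End Free.

Lemma pat_labels n (p : rterm n) s t nx e : e \in (pat p s t nx).1 -> e.2 < n.
Proof.
elim: p s t nx => [i|a IHa b IHb|a IHa b IHb|a IHa b IHb] s t nx //=.
- by rewrite inE => /eqP -> /=; exact: ltn_ord.
- by rewrite mem_cat => /orP [/IHa|/IHb].
- by rewrite mem_cat => /orP [/IHa|/IHb].
Qed.

Lemma In_mem (T : eqType) (x : T) (s : seq T) : x \in s -> List.In x s.
Proof. elim: s => //= y s IH; rewrite inE => /orP [/eqP ->|/IH]; auto. Qed.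

Lemma eval_translate (U : malcev_condition) F (ar : F -> nat) (A : algebra ar)
  (tr : forall g : msym U, term ar 'I_(marity g)) (g : msym U) (phi : 'I_(marity g) -> nat) (v : nat -> A) :
  eval v (translate tr (App g (fun k => Var (phi k)))) = eval (fun k => v (phi k)) (tr g).
Proof. by rewrite /= eval_subst. Qed.

Definition csym (a b : nat) : finType := ('I_a + 'I_b)%type.

Section Cond.
Variable n : nat.
Variables p q : rterm n.
Definition pEp := (pat p 0 1 2).1.
Definition Np := (pat p 0 1 2).2.
Definition qEq := (pat q 0 1 2).1.
Definition Nq := (pat q 0 1 2).2.
Definition Mar := size pEp + Np.+1.
Definition CS := csym Nq.+1 (size qEq).
Definition LftA : 'I_Mar -> term (fun _ : CS => Mar) nat := fun k => Var (Lft pEp k).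

Definition ceqs : seq (term (fun _ : CS => Mar) nat * term (fun _ : CS => Mar) nat) :=
  (App (inl (inord 0) : CS) LftA, Var 0) :: (App (inl (inord 1) : CS) LftA, Var 1) ::
  List.flat_map (fun e : 'I_(size qEq) =>
     let ed := nth dflt qEq e in
     [:: (App (inl (inord ed.1.1) : CS) LftA, App (inr e : CS) LftA);
         (App (inl (inord ed.1.2) : CS) LftA, App (inr e : CS) (fun k => Var (Rgt pEp ed.2 k)))])
    (enum 'I_(size qEq)).

Definition cond : malcev_condition := @MalcevCondition CS (fun _ => Mar) ceqs.

Lemma cond_sound (V : variety) : join_free p -> join_free q -> realizes V cond ->
  forall A : algebra (@varity V), in_variety A -> crr_ineq A p q.
Proof.
move=> jp jq [tr htr] A hA R hR a b hab.
pose v0 := fun k : nat => if k == 0 then a else b.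
have [v [ev hv]] := pat_complete (v := v0) (s := 0) (t := 1) (nx := 2) jp isT isT hab.
pose y x := eval (fun k : 'I_Mar => v (Lft pEp k)) (tr (inl (inord x) : CS)).
have hS : y 0 = a.
  rewrite /y; have := htr _ (or_introl erefl) A hA v; rewrite /= eval_subst /= => ->.
  by rewrite ev.
have hT : y 1 = b.
  rewrite /y; have := htr _ (or_intror (or_introl erefl)) A hA v; rewrite /= eval_subst /= => ->.
  by rewrite ev.
rewrite -hS -hT; apply: (pat_sound (nx := 2)) => // e he.
have hj : index e qEq < size qEq by rewrite index_mem.
pose ej := Ordinal hj.
have hed : nth dflt qEq ej = e by exact: nth_index.
have hl := pat_labels he; exists (Ordinal hl); split => //.
have hin1 : List.In (App (inl (inord e.1.1) : CS) LftA, App (inr ej : CS) LftA) (meqs cond).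
  right; right; apply/List.in_flat_map; exists ej; split; first by apply: In_mem; rewrite mem_enum.
  by rewrite /= hed; left.
have hin2 : List.In (App (inl (inord e.1.2) : CS) LftA,
                     App (inr ej : CS) (fun k => Var (Rgt pEp e.2 k))) (meqs cond).
  right; right; apply/List.in_flat_map; exists ej; split; first by apply: In_mem; rewrite mem_enum.
  by rewrite /= hed; right; left.
have E1 := htr _ hin1 A hA v; have E2 := htr _ hin2 A hA v.
rewrite /= !eval_subst /= in E1 E2.
rewrite /y E1 E2; apply: crr_eval (hR _) _ => k.
rewrite /Lft /Rgt; case: ifP => hk; last exact: (hR _).1.
case: eqP => hl2; last exact: (hR _).1.
have := hv _ (mem_nth dflt hk) => -[i' [hi' hR']].
have -> : Ordinal hl = i' by apply: val_inj; rewrite /= hi' hl2.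
exact: hR'.
Qed.

Lemma cond_free (V : variety) : join_free q ->
  rinterp (@gen V n pEp) q (gx V 0) (gx V 1) -> realizes V cond.
Proof.
move=> jq H.
have [h [eh hh]] := pat_complete (v := gx V) (s := 0) (t := 1) (nx := 2) jq isT isT H.
have hbp := (pat_bound p (s := 0) (t := 1) (nx := 2) isT isT).
have hbq := (pat_bound q (s := 0) (t := 1) (nx := 2) isT isT).
have ch : forall e : 'I_(size qEq), exists tau : term (@varity V) nat,
    h (nth dflt qEq e).1.1 = mkQ (subst (fun j => Var (Lft pEp j)) tau) /\
    h (nth dflt qEq e).1.2 = mkQ (subst (fun j => Var (Rgt pEp (nth dflt qEq e).2 j)) tau).
  move=> e; have := hh _ (mem_nth dflt (ltn_ord e)) => -[i [hi hg]].
  rewrite -hi; exact: gen_tau hg.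
pose taus := fun e => proj1_sig (constructive_indefinite_description _ (ch e)).
have htaus : forall e, _ := fun e => proj2_sig (constructive_indefinite_description _ (ch e)).
have d0lt : size pEp < Mar by rewrite /Mar -{1}(addn0 (size pEp)) ltn_add2l.
pose d0 : 'I_Mar := Ordinal d0lt.
pose conv x : 'I_Mar := odflt d0 (insub x).
have convE : forall x, nat_of_ord (conv x) = if x < Mar then x else size pEp.
  move=> x; rewrite /conv; case: insubP => [u hu hux|] /=; first by rewrite hux hu.
  by move/negbTE => ->.
pose clampN y := if y <= Np then y else 0.
have bnd : forall k, k < size pEp -> (nth dflt pEp k).1.1 <= Np /\ (nth dflt pEp k).1.2 <= Np.
  move=> k hk; have [h1 h2] := hbp.2 _ (mem_nth dflt hk); split; exact: ltnW.
have Lsh : forall y, Lft pEp (conv (y + size pEp)) = clampN y.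
  move=> y; rewrite /Lft convE /Mar /clampN [y + _]addnC ltn_add2l ltnS.
  case: (leqP y Np) => hy; first by rewrite ltnNge leq_addr /= addKn.
  by rewrite ltnn subnn.
have gen_conv : forall phi : nat -> nat,
    (forall x, size pEp <= x -> phi x = x - size pEp) ->
    (forall x, x < size pEp -> phi x <= Np) ->
    forall x, phi (conv x) = clampN (phi x).
  move=> phi h1 h2 x; rewrite convE /clampN; case: ifP => hx.
    case: (ltnP x (size pEp)) => hxm; first by rewrite h2.
    rewrite h1 //.
    have -> : (x - size pEp <= Np) = true by apply/idP; move: hx; rewrite /Mar; lia.
    by [].
  have hxm : size pEp <= x by move/negbT: hx; rewrite /Mar; lia.
  rewrite !h1 // subnn.
  have -> : (x - size pEp <= Np) = false by apply/negbTE; move/negbT: hx; rewrite /Mar; lia.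
  by [].
have Lc : forall x, Lft pEp (conv x) = clampN (Lft pEp x).
  apply: gen_conv => x hx; rewrite /Lft ?hx.
    by rewrite ltnNge hx.
  exact: (bnd x hx).1.
have Rc : forall l x, Rgt pEp l (conv x) = clampN (Rgt pEp l x).
  move=> l; apply: gen_conv => x hx; rewrite /Rgt ?hx.
    by rewrite ltnNge hx.
  by case: ifP => _; [exact: (bnd x hx).2 | exact: (bnd x hx).1].
pose tr := fun g : CS => match g return term (@varity V) 'I_Mar with
  | inl w => subst (fun x => Var (conv (x + size pEp))) (repr (h w))
  | inr e => subst (fun x => Var (conv x)) (taus e) end.
exists tr => eqn.
have TL : forall w, w <= Nq ->
    subst (fun i : 'I_Mar => Var (Lft pEp i))
      (subst (fun x => Var (conv (x + size pEp))) (repr (h (inord w : 'I_Nq.+1)))) =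
    subst (fun x => Var (clampN x)) (repr (h w)).
  move=> ww hww; rewrite subst_subst inordK //; apply: subst_ext => x /=.
  by rewrite Lsh.
have TR : forall (e : 'I_(size qEq)) (phi : nat -> nat), (forall x, phi (conv x) = clampN (phi x)) ->
    subst (fun i : 'I_Mar => Var (phi i)) (subst (fun x => Var (conv x)) (taus e)) =
    subst (fun x => Var (clampN x)) (subst (fun x => Var (phi x)) (taus e)).
  move=> e phi hphi; rewrite !subst_subst; apply: subst_ext => x /=.
  by rewrite hphi.
have vs : forall w (s : term (@varity V) nat), w <= Nq -> h w = mkQ s ->
    @variety_satisfies V (subst (fun x => Var (clampN x)) (repr (h w)),
                          subst (fun x => Var (clampN x)) s).
  move=> w s hw hws; apply: (vsat_subst (V := V)); apply: mkQ_inj.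
  by rewrite mkQ_repr.
move=> [<-|[<-|/List.in_flat_map [e [_ [<-|[<-|[]]]]]]] /=.
- rewrite TL //; exact: (vs 0 (Var 0) isT (eh 0 isT)).
- rewrite TL; last exact: ltnW hbq.1.
  have := (vs 1 (Var 1) (ltnW hbq.1) (eh 1 isT)); rewrite /= /clampN.
  by have -> : 1 <= Np by exact: ltnW hbp.1.
- have hw : (nth dflt qEq e).1.1 <= Nq by apply: ltnW; exact: (hbq.2 _ (mem_nth dflt (ltn_ord e))).1.
  rewrite (TL _ hw) (TR e _ Lc); apply: vs hw _; exact: (htaus e).1.
- have hw : (nth dflt qEq e).1.2 <= Nq by apply: ltnW; exact: (hbq.2 _ (mem_nth dflt (ltn_ord e))).2.
  rewrite (TL _ hw) (TR e _ (Rc _)); apply: vs hw _; exact: (htaus e).2.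
Qed.

Lemma free_p (V : variety) : join_free p -> rinterp (@gen V n pEp) p (gx V 0) (gx V 1).
Proof.
move=> jp; apply: (pat_sound (nx := 2)) => // e he.
have hl := pat_labels he; exists (Ordinal hl); split => //.
by case: e he hl => [[u v] l] he hl /=; apply: gbase.
Qed.

End Cond.

Theorem theorem1 (n : nat) (p q : rterm n) :
  join_free p ->
  malcev_class (fun V : variety =>
    forall A : algebra (@varity V), in_variety A -> crr_ineq A p q) /\
  (join_free q ->
   strong_malcev_class (fun V : variety =>
     forall A : algebra (@varity V), in_variety A -> crr_ineq A p q)).
Proof.
move=> jp.
have Kfree : forall V : variety, (forall A : algebra (@varity V), in_variety A -> crr_ineq A p q) ->
    rinterp (@gen V n (pEp p)) q (gx V 0) (gx V 1).
  move=> V hK; apply: (hK (QA V) (@QA_in V) (@gen V n (pEp p))) => [i|]; first exact: gen_crr.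
  exact: free_p.
have Krefl : forall V, allrefl (@gen V n (pEp p)) by move=> V i a; exact: grefl.
split.
- exists (fun k => cond p (unj k q)); split.
  + move=> k V hr.
    apply: cond_free; first exact: unj_jf.
    apply: (unj_le (Krefl V) (leqnSn k)).
    have hK := cond_sound jp (unj_jf k q) hr.
    apply: (hK (QA V) (@QA_in V) (@gen V n (pEp p))) => [i|]; [exact: gen_crr | exact: free_p].
  + move=> V; split.
      move/Kfree/(unj_ex (Krefl V)) => [k hk]; exists k; apply: cond_free => //; exact: unj_jf.
    move=> [k hr] A hA R hR a b hab.
    exact: (@unj_sub n A R k q a b (cond_sound jp (unj_jf k q) hr hA hR hab)).
- move=> jq; exists (cond p q) => V; split.
    by move/Kfree; exact: cond_free jq.
  exact: cond_sound jp jq.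
Qed.
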